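(* Let $x,y$ be distinct odd primes and let $z$ be an odd positive integer divisible by $y$ and coprime to $x$. If $x$ is not balanced modulo $z$, then $x$ is not balanced modulo $yz$.
   Context: For positive integers $n,m$ with $\gcd(n,m)=1$, $n$ is said to be not balanced modulo $m$ iff there exists an odd Dirichlet character $\chi$ modulo $m$ (i.e. $\chi(-1)=-1$) such that $\chi(n)=1$ and $\sum_{0<k<m/2}\chi(k)\neq0$; otherwise $n$ is balanced modulo $m$. *)

(* Defs.v *)
From mathcomp Require Import all_boot all_order all_algebra all_field.
Set Implicit Arguments. Unset Strict Implicit. Unset Printing Implicit Defensive.
Import Order.TTheory GRing.Theory Num.Theory.
Local Open Scope ring_scope.

Definition dirichlet_char (m : nat) (chi : nat -> algC) : Prop :=
  [/\ forall a b : nat, chi (a * b)%N = chi a * chi b,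
      forall a : nat, chi (a + m)%N = chi a,
      forall a : nat, (chi a != 0) = coprime a m
    & chi 1%N = 1].

(* chi(-1) is chi(m-1) since chi is m-periodic. *)
Definition odd_char (m : nat) (chi : nat -> algC) : Prop := chi (m - 1)%N = -1.

Definition half_sum (m : nat) (chi : nat -> algC) : algC :=
  \sum_(1 <= k < m | (k.*2 < m)%N) chi k.

(* n is not balanced modulo m (gcd(n,m) = 1 assumed separately). *)
Definition not_balanced (n m : nat) : Prop :=
  exists chi : nat -> algC,
    [/\ dirichlet_char m chi, odd_char m chi, chi n = 1 & half_sum m chi != 0].

Definition balanced (n m : nat) : Prop := ~ not_balanced n m.

(* Main.v *)
Require Import Defs.
From mathcomp Require Import all_boot all_order all_algebra all_field.
From mathcomp Require Import zify.
Import Order.TTheory GRing.Theory Num.Theory.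
Local Open Scope ring_scope.

Lemma periodN (m : nat) (f : nat -> algC) :
  (forall a, f (a + m)%N = f a) -> forall q a, f (a + q * m)%N = f a.
Proof.
move=> Hp; elim=> [|q IH] a; first by rewrite mul0n addn0.
have -> : (a + q.+1 * m = (a + q * m) + m)%N by rewrite mulSn; lia.
by rewrite Hp IH.
Qed.

Lemma shift_sum (m : nat) (f : nat -> algC) :
  (forall a, f (a + m)%N = f a) -> forall a,
  \sum_(0 <= k < m) f (k + a)%N = \sum_(0 <= k < m) f k.
Proof.
move=> Hp; elim=> [|a IH]; first by apply: eq_bigr => k _; rewrite addn0.
have E1 := @big_nat_recl _ 0 +%R m 0 (fun k => f (k + a)%N) (leq0n m).
have E2 := @big_nat_recr _ 0 +%R m 0 (fun k => f (k + a)%N) (leq0n m).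
rewrite E1 /= add0n addnC Hp in E2.
rewrite -IH.
have -> : \sum_(0 <= k < m) f (k + a.+1)%N = \sum_(0 <= k < m) f (k.+1 + a)%N.
  by apply: eq_bigr => k _; rewrite addnS.
by apply: (@addrI _ (f a)); rewrite E2 addrC.
Qed.

Lemma sum_zero (z : nat) (chi : nat -> algC) :
  dirichlet_char z chi -> odd_char z chi -> (0 < z)%N ->
  \sum_(0 <= k < z) chi k = 0.
Proof.
move=> [Hm Hp Hc H1] Ho Hz.
set S := \sum_(0 <= k < z) chi k.
have Hneg : forall k, (1 <= k <= z)%N -> chi (z - k)%N = - chi k.
  move=> k /andP [k1 kz].
  rewrite -mulN1r -Ho -Hm.
  have -> : ((z - 1) * k = (z - k) + (k - 1) * z)%N by nia.
  by rewrite periodN.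
have : S = - S.
  rewrite {1}/S big_nat_rev /S -(@shift_sum z chi Hp 1) -sumrN.
  apply: eq_big_nat => k /andP [_ kz].
  rewrite add0n -Hneg; last by lia.
  congr (chi _); lia.
move=> HS.
have : S *+ 2 == 0 by rewrite mulr2n {1}HS addNr.
by rewrite mulrn_eq0 /= => /eqP.
Qed.

Lemma half_sumE (m : nat) (chi : nat -> algC) : odd m ->
  half_sum m chi = \sum_(1 <= k < (m./2).+1) chi k.
Proof.
move=> Hodd.
have hm := odd_double_half m; rewrite Hodd -muln2 in hm.
rewrite /half_sum [RHS](big_nat_widen 1 _ m); last by lia.
apply: eq_bigl => k /=; rewrite -muln2.
apply/idP/idP; lia.
Qed.

Theorem lemma4p7 (x y z : nat) :
  prime x -> prime y -> odd x -> odd y -> x != y ->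
  odd z -> (0 < z)%N -> (y %| z)%N -> coprime x z ->
  not_balanced x z -> not_balanced x (y * z).
Proof.
move=> px py ox oy nxy oz z0 yz cxz [chi [Hd Ho Hx Hs]].
have Hd' := Hd; case: Hd' => Hm Hp Hc H1.
have y0 : (0 < y)%N by apply: prime_gt0.
exists chi; split => //.
- split => //.
  + by move=> a; rewrite periodN.
  + move=> a; rewrite coprimeMr Hc.
    by case cz: (coprime a z); rewrite ?andbF // (coprime_dvdr yz cz).
- rewrite /odd_char -Ho.
  have -> : (y * z - 1 = (z - 1) + (y - 1) * z)%N by nia.
  by rewrite periodN.
- have oyz : odd (y * z) by rewrite oddM oy oz.
  rewrite half_sumE // in Hs; rewrite half_sumE //.
  set q := y./2; set t := z./2.
  have hy := odd_double_half y; rewrite oy -muln2 -/q in hy.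
  have hz := odd_double_half z; rewrite oz -muln2 -/t in hz.
  have hyz := odd_double_half (y * z); rewrite oyz -muln2 in hyz.
  have -> : ((y * z)./2 = z * q + t)%N by nia.
  have Hblk : forall r, \sum_(1 <= k < z * r + 1) chi k = 0.
    elim=> [|r IH]; first by rewrite muln0 big_geq.
    rewrite (big_cat_nat (n := (z * r + 1)%N)); [|lia|lia].
    rewrite IH /= add0r -{1}(add0n (z * r + 1)%N) big_addn.
    have -> : (z * r.+1 + 1 - (z * r + 1) = z)%N by lia.
    by rewrite (@shift_sum z chi Hp) (@sum_zero z chi Hd Ho z0).
  rewrite (big_cat_nat (n := (z * q + 1)%N)); [|lia|lia].
  rewrite Hblk /= add0r -{1}(add0n (z * q + 1)%N) big_addn.
  have -> : ((z * q + t).+1 - (z * q + 1) = t)%N by lia.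
  rewrite -{1}(add0n 1%N) big_addn subn1 /= in Hs.
  rewrite -/t in Hs.
  suff -> : \sum_(0 <= i < t) chi (i + (z * q + 1))%N = \sum_(0 <= i < t) chi (i + 1)%N by [].
  apply: eq_bigr => k _.
  have -> : (k + (z * q + 1) = (k + 1) + q * z)%N by lia.
  by rewrite periodN.
Qed.
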